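(* Let $0\le\lambda<1$, let $Y_1,Y_2,\ldots$ be i.i.d. Poisson random variables with mean $\lambda$, and define $X=0$ if $Y_1=0$ and otherwise $X=\min\{z\ge1:\sum_{i=1}^{z}Y_i\le z\}$. Let $W=\max(X,1)$. Then $$\Pr(W=w)=\begin{cases}(\lambda+1)e^{-\lambda}, & w=1,\\ \dfrac{(w-1)^{w-2}}{w\,(w-2)!}\lambda^{w}e^{-w\lambda}, & w\ge2,\end{cases}$$ and, for $\lambda>0$, $$\mathbb{E}[W]=\frac{1}{\lambda}\mathbb{E}[X]=\frac{e^{-\lambda}}{1-\lambda}.$$
   Context: $\mathbb{E}[X]=\frac{\lambda}{1-\lambda}e^{-\lambda}$ is the mean of $X$; $W$ is the inter-renewal time of a modified renewal process in which every inter-decoding time of $0$ slots is replaced by $1$ slot. *)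

(* Defs.v *)
From Stdlib Require Import Reals List Arith Bool.
Import ListNotations.
Open Scope R_scope.

Definition poisson (lam : R) (k : nat) : R := exp (- lam) * lam ^ k / INR (fact k).

Fixpoint tuples (n m : nat) : list (list nat) :=
  match n with
  | O => [[]]
  | S n' => flat_map (fun a => map (cons a) (tuples n' m)) (seq 0 m)
  end.

Definition prefix_sum (k : nat) (ys : list nat) : nat := fold_right plus 0%nat (firstn k ys).

(* The event {X = z} for z >= 1, which is determined by (Y_1,...,Y_z):
   Y_1 <> 0, Y_1+...+Y_z <= z, and Y_1+...+Y_k > k for all 1 <= k < z. *)
Definition X_event (z : nat) (ys : list nat) : bool :=
  (1 <=? z)%nat && negb (prefix_sum 1 ys =? 0)%nat && (prefix_sum z ys <=? z)%nat
  && forallb (fun k => (k <? prefix_sum k ys)%nat) (seq 1 (z - 1)).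

(* Product-measure probability of a cylinder event on (Y_1,...,Y_z),
   summing over all prefixes with entries <= z (the event forces this). *)
Definition prob_cyl (lam : R) (z : nat) (E : list nat -> bool) : R :=
  fold_right Rplus 0
    (map (fun ys => fold_right Rmult 1 (map (poisson lam) ys))
         (filter E (tuples z (S z)))).

(* Pr(X = z). X = 0 iff Y_1 = 0. *)
Definition PX (lam : R) (z : nat) : R :=
  match z with
  | O => poisson lam 0
  | S _ => prob_cyl lam z (X_event z)
  end.

Definition PW (lam : R) (w : nat) : R :=
  match w with
  | O => 0
  | 1%nat => PX lam 0 + PX lam 1
  | _ => PX lam w
  end.

(* Main.v *)
Require Import Defs.
From Stdlib Require Import Reals List Arith.
From Stdlib Require Import Lra Lia Bool.
Import ListNotations.
Open Scope R_scope.

Lemma C_succ (L i : nat) : (i <= L)%nat -> C (S L) (S i) * INR (S i) = INR (S L) * C L i.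
Proof.
  intros H. unfold C. replace (S L - S i)%nat with (L - i)%nat by lia.
  rewrite !fact_simpl, !mult_INR.
  assert (H1 := INR_fact_neq_0 i). assert (H2 := INR_fact_neq_0 (L - i)).
  assert (H3 : INR (S i) <> 0) by (apply not_0_INR; lia).
  field. auto.
Qed.

Lemma sum_shift (a : nat -> R) (n : nat) :
  sum_f_R0 a (S n) = a 0%nat + sum_f_R0 (fun i => a (S i)) n.
Proof. rewrite decomp_sum by lia. reflexivity. Qed.

Lemma binom1 (N : R) (L : nat) :
  sum_f_R0 (fun a => C L a * N ^ (L - a)) L = (1 + N) ^ L.
Proof.
  rewrite binomial. apply sum_eq. intros i _. rewrite pow1. ring.
Qed.

Lemma binom2 (N : R) (L : nat) :
  sum_f_R0 (fun a => C L a * INR a * N ^ (L - a)) L = INR L * (1 + N) ^ (L - 1).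
Proof.
  destruct L as [|L].
  - simpl. ring.
  - rewrite sum_shift. simpl INR at 2. rewrite Rmult_0_r, Rmult_0_l, Rplus_0_l.
    replace (S L - 1)%nat with L by lia. rewrite <- binom1, scal_sum.
    apply sum_eq. intros i Hi. replace (S L - S i)%nat with (L - i)%nat by lia.
    rewrite C_succ by lia. ring.
Qed.

Lemma kem_identity (m n : nat) : (1 <= m)%nat -> (m <= n)%nat -> (2 <= n)%nat ->
  sum_f_R0 (fun a => INR (m + a - 1) / INR (n - 1) * INR (n - 1) ^ (n - m - a)
                     / INR (fact (n - m - a)) / INR (fact a)) (n - m)
  = INR m / INR n * INR n ^ (n - m) / INR (fact (n - m)).
Proof.
  intros Hm Hmn Hn. set (L := (n - m)%nat). set (N := INR (n - 1)).
  assert (HN : N <> 0) by (unfold N; apply not_0_INR; lia).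
  assert (HnR : INR n <> 0) by (apply not_0_INR; lia).
  assert (HL := INR_fact_neq_0 L).
  transitivity (/ (N * INR (fact L)) *
     sum_f_R0 (fun a => C L a * (INR m - 1) * N ^ (L - a) + C L a * INR a * N ^ (L - a)) L).
  - rewrite scal_sum. apply sum_eq. intros a Ha.
    replace (n - m - a)%nat with (L - a)%nat by (unfold L; lia).
    rewrite minus_INR by lia. rewrite plus_INR.
    unfold C. assert (H1 := INR_fact_neq_0 a). assert (H2 := INR_fact_neq_0 (L - a)).
    simpl (INR 1). field. auto.
  - rewrite sum_plus. rewrite binom2.
    replace (sum_f_R0 (fun a => C L a * (INR m - 1) * N ^ (L - a)) L)
      with ((INR m - 1) * (1 + N) ^ L).
    2:{ rewrite <- binom1, scal_sum. apply sum_eq. intros; ring. }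
    assert (E : 1 + N = INR n) by (unfold N; rewrite minus_INR by lia; simpl; ring).
    rewrite E. unfold L. destruct (n - m)%nat eqn:Hl.
    + assert (n = m) by lia. subst. unfold N. rewrite minus_INR by lia. simpl. assert (INR m - 1 <> 0) by (rewrite <- E; unfold N; rewrite minus_INR by lia; simpl; lra). field. auto.
    + replace (S n0 - 1)%nat with n0 by lia. simpl pow.
      assert (INR (S n0) = INR n - INR m) by (rewrite <- Hl, minus_INR by lia; reflexivity).
      rewrite H. assert (EN : N = INR n - 1) by lra. rewrite EN in *. field. repeat split; auto.
Qed.

Lemma kem0_identity (z : nat) : (2 <= z)%nat ->
  sum_f_R0 (fun a => INR (a - 1) / INR (z - 1) * INR (z - 1) ^ (z - a)
                     / INR (fact (z - a)) / INR (fact a)) z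
  = INR (z - 1) ^ (z - 2) / (INR z * INR (fact (z - 2))).
Proof.
  intros Hz. set (N := INR (z - 1)).
  assert (HN : N <> 0) by (unfold N; apply not_0_INR; lia).
  assert (HnR : INR z <> 0) by (apply not_0_INR; lia).
  assert (EN : N = INR z - 1) by (unfold N; rewrite minus_INR by lia; simpl; ring).
  assert (Hz1 := INR_fact_neq_0 z).
  transitivity (/ (N * INR (fact z)) * sum_f_R0 (fun a => C z a * INR (a - 1) * N ^ (z - a)) z).
  - rewrite scal_sum. apply sum_eq. intros a Ha. unfold C.
    assert (H1 := INR_fact_neq_0 a). assert (H2 := INR_fact_neq_0 (z - a)).
    field. auto.
  - assert (S0 : sum_f_R0 (fun a => C z a * INR (a - 1) * N ^ (z - a)) z = N ^ z).
    { assert (A : sum_f_R0 (fun a => C z a * INR a * N ^ (z - a)) z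
                - sum_f_R0 (fun a => C z a * N ^ (z - a)) z = 0).
      { rewrite binom1, binom2. replace (1 + N) with (INR z) by lra.
        destruct z as [|z']; [lia|]. replace (S z' - 1)%nat with z' by lia. simpl. ring. }
      rewrite <- minus_sum in A. destruct z as [|z']; [lia|].
      rewrite sum_shift in A |- *. simpl (INR (0 - 1)). 
      replace (sum_f_R0 (fun i => C (S z') (S i) * INR (S i - 1) * N ^ (S z' - S i)) z')
        with (sum_f_R0 (fun i => C (S z') (S i) * INR (S i) * N ^ (S z' - S i) -
                        C (S z') (S i) * N ^ (S z' - S i)) z').
      2:{ apply sum_eq. intros i _. replace (S i - 1)%nat with i by lia. rewrite S_INR. ring. }
      unfold C in A |- *. simpl (INR 0) in A. rewrite Nat.sub_0_r in A |- *.
      assert (F0 : INR (fact 0) = 1) by reflexivity. rewrite F0 in A.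
      assert (Hf := INR_fact_neq_0 (S z')).
      replace (INR (fact (S z')) / (1 * INR (fact (S z'))) * 0 * N ^ S z' -
               INR (fact (S z')) / (1 * INR (fact (S z'))) * N ^ S z') with (- N ^ S z') in A
        by (field; auto).
      replace (INR (fact (S z')) / (1 * INR (fact (S z'))) * INR 0 * N ^ S z') with 0
        by (simpl; field; auto).
      lra. }
    rewrite S0. destruct z as [|[|z']]; try lia.
    replace (S (S z') - 2)%nat with z' by lia.
    rewrite !fact_simpl, !mult_INR.
    assert (Hf := INR_fact_neq_0 z').
    assert (E1 : INR (S z') = N) by (unfold N; f_equal; lia).
    assert (E2 : INR (S (S z')) = N + 1) by (rewrite S_INR, E1; ring).
    rewrite E1, E2. simpl pow. field. repeat split; auto.
Qed.

Definition wt (lam : R) (ys : list nat) : R := fold_right Rmult 1 (map (poisson lam) ys).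

Fixpoint Pw (m : nat) (ys : list nat) : bool :=
  match ys with
  | [] => true
  | y :: ys' => match ys' with
                | [] => (m + y <=? 1)%nat
                | _ => (2 <=? m + y)%nat && Pw (m + y - 1) ys'
                end
  end.

Definition Vm (lam : R) (M m n : nat) : R :=
  fold_right Rplus 0 (map (fun ys => if Pw m ys then wt lam ys else 0) (tuples n M)).

Definition sumL (f : list nat -> R) (l : list (list nat)) := fold_right Rplus 0 (map f l).

Lemma fold_filter (f : list nat -> R) (E : list nat -> bool) l :
  fold_right Rplus 0 (map f (filter E l)) =
  fold_right Rplus 0 (map (fun y => if E y then f y else 0) l).
Proof. induction l as [|a l IH]; simpl; auto. destruct (E a); simpl; rewrite IH; ring. Qed.

Lemma fold_app {A} (f : A -> R) l1 l2 :
  fold_right Rplus 0 (map f (l1 ++ l2)) = fold_right Rplus 0 (map f l1) + fold_right Rplus 0 (map f l2).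
Proof. induction l1; simpl; [ring|]. rewrite IHl1; ring. Qed.

Lemma tuples_S_sum (f : list nat -> R) n M :
  fold_right Rplus 0 (map f (tuples (S n) M)) =
  fold_right Rplus 0 (map (fun a => fold_right Rplus 0 (map (fun ys => f (a :: ys)) (tuples n M))) (seq 0 M)).
Proof.
  simpl. generalize (seq 0 M). intros l. induction l as [|a l IH]; simpl; auto.
  rewrite fold_app, IH, map_map. reflexivity.
Qed.

Lemma tuples_length n M ys : In ys (tuples n M) -> length ys = n.
Proof.
  revert ys. induction n; simpl; intros ys H.
  - destruct H as [<-|[]]; reflexivity.
  - apply in_flat_map in H. destruct H as [a [_ H]]. apply in_map_iff in H.
    destruct H as [ys' [<- H]]. simpl. f_equal. auto.
Qed.

Lemma fold_ext_in {A} (f g : A -> R) l :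
  (forall x, In x l -> f x = g x) -> fold_right Rplus 0 (map f l) = fold_right Rplus 0 (map g l).
Proof. intros H. f_equal. apply map_ext_in. auto. Qed.

Lemma fold_scal {A} (c : R) (f : A -> R) l :
  fold_right Rplus 0 (map (fun y => c * f y) l) = c * fold_right Rplus 0 (map f l).
Proof. induction l; simpl; [ring|]. rewrite IHl; ring. Qed.

Lemma fold_seq (g : nat -> R) K :
  fold_right Rplus 0 (map g (seq 0 (S K))) = sum_f_R0 g K.
Proof.
  induction K.
  - simpl. ring.
  - rewrite seq_S, fold_app, IHK. simpl. ring.
Qed.

Lemma sum_trunc (g : nat -> R) L K :
  (L <= K)%nat -> (forall a, (L < a <= K)%nat -> g a = 0) -> sum_f_R0 g K = sum_f_R0 g L.
Proof.
  intros HLK H. induction K.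
  - assert (L = 0%nat) by lia. subst. reflexivity.
  - destruct (Nat.eq_dec L (S K)). { subst. reflexivity. }
    simpl. rewrite IHK by (try lia; intros; apply H; lia). rewrite H by lia. ring.
Qed.

Lemma sum_zero (g : nat -> R) K : (forall a, (a <= K)%nat -> g a = 0) -> sum_f_R0 g K = 0.
Proof.
  intros H. induction K; simpl. - apply H; lia. - rewrite IHK, H by (try lia; intros; apply H; lia). ring.
Qed.

Lemma ps_S k y l : prefix_sum (S k) (y :: l) = (y + prefix_sum k l)%nat.
Proof. reflexivity. Qed.

Lemma Pw_spec : forall ys m, ys <> [] ->
  (Pw m ys = true <-> ((m + prefix_sum (length ys) ys <= length ys)%nat /\
     forall k, (1 <= k < length ys)%nat -> (k < m + prefix_sum k ys)%nat)).
Proof.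
  induction ys as [|y ys IH]; intros m Hne; [congruence|].
  destruct ys as [|y2 r].
  - unfold prefix_sum; simpl. rewrite Nat.leb_le. split; [intros H; split; [lia| intros; lia] | intros [H _]; lia].
  - change (Pw m (y :: y2 :: r)) with ((2 <=? m + y)%nat && Pw (m + y - 1) (y2 :: r)).
    rewrite andb_true_iff, Nat.leb_le, IH by congruence.
    set (ys := y2 :: r). change (length (y :: ys)) with (S (length ys)).
    rewrite ps_S. assert (Hl : (1 <= length ys)%nat) by (unfold ys; simpl; lia).
    split.
    + intros [H1 [H2 H3]]. split; [lia|]. intros [|k] Hk; [lia|].
      destruct k as [|k].
      * unfold prefix_sum. simpl. lia.
      * rewrite ps_S. specialize (H3 (S k)). lia.
    + intros [H2 H3]. assert (H1 := H3 1%nat ltac:(lia)). unfold prefix_sum in H1. simpl in H1.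
      split; [lia|]. split; [lia|]. intros k Hk. specialize (H3 (S k) ltac:(lia)).
      rewrite ps_S in H3. lia.
Qed.

Lemma X_event_spec z ys :
  X_event z ys = true <-> ((1 <= z)%nat /\ prefix_sum 1 ys <> 0%nat /\ (prefix_sum z ys <= z)%nat /\
     forall k, (1 <= k < z)%nat -> (k < prefix_sum k ys)%nat).
Proof.
  unfold X_event. rewrite !andb_true_iff, negb_true_iff, !Nat.leb_le, Nat.eqb_neq, forallb_forall.
  split.
  - intros [[[H1 H2] H3] H4]. repeat split; auto. intros k Hk. apply Nat.ltb_lt, H4, in_seq. lia.
  - intros [H1 [H2 [H3 H4]]]. repeat split; auto. intros k Hk. apply in_seq in Hk.
    apply Nat.ltb_lt, H4. lia.
Qed.

Lemma X_event_cons z a ys : (2 <= z)%nat -> length ys = (z - 1)%nat ->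
  X_event z (a :: ys) = ((2 <=? a)%nat && Pw (a - 1) ys).
Proof.
  intros Hz Hl. destruct ys as [|y2 r]; [simpl in Hl; lia|].
  apply eq_true_iff_eq. rewrite X_event_spec, andb_true_iff, Nat.leb_le, Pw_spec by congruence.
  rewrite Hl. replace z with (S (z - 1)) at 2 3 by lia. setoid_rewrite ps_S.
  unfold prefix_sum at 1. simpl firstn. simpl fold_right.
  split.
  - intros [_ [H1 [H2 H3]]]. assert (H4 := H3 1%nat ltac:(lia)). unfold prefix_sum in H4. simpl in H4.
    split; [lia|]. split; [lia|]. intros k Hk. specialize (H3 (S k) ltac:(lia)). rewrite ps_S in H3. lia.
  - intros [H1 [H2 H3]]. split; [lia|]. split; [lia|]. split; [lia|].
    intros [|k] Hk; [lia|]. destruct k as [|k].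
    + unfold prefix_sum. simpl. lia.
    + rewrite ps_S. specialize (H3 (S k)). lia.
Qed.

Lemma fold_zero {A} (l : list A) : fold_right Rplus 0 (map (fun _ => 0) l) = 0.
Proof. induction l; simpl; auto. rewrite IHl; ring. Qed.

Lemma Pw_cons m a ys : ys <> [] -> Pw m (a :: ys) = ((2 <=? m + a)%nat && Pw (m + a - 1) ys).
Proof. destruct ys; [congruence|reflexivity]. Qed.

Lemma Vm_one lam M m : (1 <= M)%nat ->
  Vm lam M m 1 = sum_f_R0 (fun a => if (m + a <=? 1)%nat then poisson lam a else 0) (M - 1).
Proof.
  intros HM. unfold Vm. rewrite tuples_S_sum. replace M with (S (M - 1)) at 1 by lia.
  rewrite fold_seq. apply sum_eq. intros a _. simpl. unfold wt. simpl.
  destruct (m + a <=? 1)%nat; ring.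
Qed.

Lemma Vm_succ lam M m n : (1 <= M)%nat -> (1 <= n)%nat ->
  Vm lam M m (S n) = sum_f_R0 (fun a => if (2 <=? m + a)%nat then poisson lam a * Vm lam M (m + a - 1) n else 0) (M - 1).
Proof.
  intros HM Hn. unfold Vm. rewrite tuples_S_sum. replace M with (S (M - 1)) at 1 by lia.
  rewrite fold_seq. apply sum_eq. intros a _.
  destruct (2 <=? m + a)%nat eqn:E.
  - rewrite <- fold_scal. apply fold_ext_in. intros ys Hys.
    assert (Hl := tuples_length _ _ _ Hys).
    rewrite Pw_cons by (intros ->; simpl in Hl; lia). rewrite E. simpl.
    destruct (Pw (m + a - 1) ys); unfold wt; simpl; ring.
  - transitivity (fold_right Rplus 0 (map (fun _ : list nat => 0) (tuples n M))); [|apply fold_zero]. apply fold_ext_in. intros ys Hys.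
    assert (Hl := tuples_length _ _ _ Hys).
    rewrite Pw_cons by (intros ->; simpl in Hl; lia). rewrite E. reflexivity.
Qed.

Definition Fc (m n : nat) : R := INR m / INR n * INR n ^ (n - m) / INR (fact (n - m)).

Definition Vf (lam : R) (m n : nat) : R :=
  if (m <=? n)%nat then exp (- (INR n * lam)) * lam ^ (n - m) * Fc m n else 0.

Lemma exp_comb lam n : exp (- lam) * exp (- (INR n * lam)) = exp (- (INR (S n) * lam)).
Proof. rewrite <- exp_plus. f_equal. rewrite S_INR. ring. Qed.

Theorem Vm_formula lam : forall n, (1 <= n)%nat -> forall m M, (1 <= m)%nat -> (S n <= M)%nat ->
  Vm lam M m n = Vf lam m n.
Proof.
  induction n as [|n IH]; intros Hn m M Hm HM; [lia|].
  destruct n as [|n'].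
  - rewrite Vm_one by lia. unfold Vf.
    rewrite sum_trunc with (L := 0%nat) by (try lia; intros a Ha;
       destruct (m + a <=? 1)%nat eqn:E; auto; apply Nat.leb_le in E; lia).
    simpl. destruct m as [|[|m]]; try lia; simpl.
    + unfold Fc, poisson. simpl. rewrite Rmult_1_l. field.
    + reflexivity.
  - set (n := S n') in *. rewrite Vm_succ by lia.
    rewrite (sum_eq _ (fun a => if (2 <=? m + a)%nat then poisson lam a * Vf lam (m + a - 1) n else 0)).
    2:{ intros a Ha. destruct (2 <=? m + a)%nat eqn:E; auto. apply Nat.leb_le in E.
        rewrite IH by (unfold n; lia). reflexivity. }
    unfold Vf at 2. destruct (m <=? S n)%nat eqn:Emn.
    + apply Nat.leb_le in Emn.
      rewrite sum_trunc with (L := (S n - m)%nat).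
      2: lia.
      2:{ intros a Ha. destruct (2 <=? m + a)%nat; auto. unfold Vf.
          destruct (m + a - 1 <=? n)%nat eqn:E; [apply Nat.leb_le in E; lia| ring]. }
      unfold Fc. rewrite <- (kem_identity m (S n)) by (unfold n; lia).
      rewrite scal_sum. apply sum_eq. intros a Ha.
      replace (S n - 1)%nat with n by lia.
      unfold Vf. replace (m + a - 1 <=? n)%nat with true by (symmetry; apply Nat.leb_le; lia).
      unfold Fc. replace (n - (m + a - 1))%nat with (S n - m - a)%nat by lia.
      destruct (2 <=? m + a)%nat eqn:E.
      * unfold poisson. rewrite <- (exp_comb lam n).
        assert (EP : lam ^ (S n - m) = lam ^ a * lam ^ (S n - m - a)) by (rewrite <- pow_add; f_equal; lia). rewrite EP.
        assert (H1 := INR_fact_neq_0 a). assert (H2 := INR_fact_neq_0 (S n - m - a)).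
        assert (H3 : INR n <> 0) by (apply not_0_INR; unfold n; lia).
        field. auto.
      * apply Nat.leb_gt in E. replace (m + a - 1)%nat with 0%nat by lia. change (INR 0) with 0. unfold Rdiv. ring.
    + apply sum_zero. intros a Ha. destruct (2 <=? m + a)%nat; auto. unfold Vf.
      apply Nat.leb_gt in Emn. destruct (m + a - 1 <=? n)%nat eqn:E; [apply Nat.leb_le in E; lia| ring].
Qed.

Lemma PX0 lam : PX lam 0 = exp (- lam).
Proof. simpl. unfold poisson. simpl. field. Qed.

Lemma PX1 lam : PX lam 1 = lam * exp (- lam).
Proof. unfold PX, prob_cyl. simpl. unfold poisson. simpl. field. Qed.

Lemma PX_formula lam z : (2 <= z)%nat ->
  PX lam z = INR (z - 1) ^ (z - 2) / (INR z * INR (fact (z - 2))) * lam ^ z * exp (- (INR z * lam)).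
Proof.
  intros Hz. destruct z as [|z0]; [lia|]. change (PX lam (S z0)) with (prob_cyl lam (S z0) (X_event (S z0))).
  set (z := S z0) in *. unfold prob_cyl. rewrite fold_filter. rewrite (tuples_S_sum _ z0 (S z)).
  rewrite fold_seq.
  rewrite (sum_eq _ (fun a => if (2 <=? a)%nat then poisson lam a * Vf lam (a - 1) z0 else 0)).
  2:{ intros a Ha. destruct (2 <=? a)%nat eqn:E.
      - rewrite <- Vm_formula with (M := S z) by (apply Nat.leb_le in E; unfold z; lia).
        unfold Vm. rewrite <- fold_scal. apply fold_ext_in. intros ys Hys.
        assert (Hl := tuples_length _ _ _ Hys).
        rewrite X_event_cons by (unfold z; lia). rewrite E. simpl.
        destruct (Pw (a - 1) ys); unfold wt; simpl; ring.
      - transitivity (fold_right Rplus 0 (map (fun _ : list nat => 0) (tuples z0 (S z)))); [|apply fold_zero].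
        apply fold_ext_in. intros ys Hys. assert (Hl := tuples_length _ _ _ Hys).
        rewrite X_event_cons by (unfold z; lia). rewrite E. reflexivity. }
  rewrite <- kem0_identity by (unfold z; lia).
  rewrite Rmult_assoc, (Rmult_comm (sum_f_R0 _ _)), scal_sum.
  apply sum_eq. intros a Ha. replace (z - 1)%nat with z0 by (unfold z; lia).
  destruct (2 <=? a)%nat eqn:E.
  - apply Nat.leb_le in E. unfold Vf. replace (a - 1 <=? z0)%nat with true by (symmetry; apply Nat.leb_le; unfold z in Ha; lia).
    unfold Fc, poisson. replace (z0 - (a - 1))%nat with (z - a)%nat by (unfold z in *; lia).
    assert (EP : lam ^ z = lam ^ a * lam ^ (z - a)) by (rewrite <- pow_add; f_equal; unfold z in *; lia).
    rewrite EP. assert (EE : exp (-(INR z * lam)) = exp (-lam) * exp (-(INR z0 * lam))) by (unfold z; rewrite exp_comb; reflexivity). rewrite EE.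
    assert (H1 := INR_fact_neq_0 a). assert (H2 := INR_fact_neq_0 (z - a)).
    assert (H3 : INR z0 <> 0) by (apply not_0_INR; unfold z in *; lia).
    field. auto.
  - apply Nat.leb_gt in E. replace (a - 1)%nat with 0%nat by lia. change (INR 0) with 0. unfold Rdiv. ring.
Qed.

Notation Cb := Binomial.C.
From Coquelicot Require Import Coquelicot.
Open Scope R_scope.

Definition G (n j : nat) (c : R) : R :=
  sum_f_R0 (fun i => Cb n i * (-1) ^ (n - i) * (INR i + c) ^ j) n.

Lemma G_zero : forall j n c, (j < n)%nat -> G n j c = 0.
Proof.
  induction j as [|j IH]; intros n c Hjn.
  - unfold G. transitivity ((1 + -1) ^ n).
    + rewrite binomial. apply sum_eq. intros i _. rewrite pow1. simpl. ring.
    + replace (1 + -1) with 0 by ring. apply pow_i. lia.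
  - unfold G.
    rewrite (sum_eq _ (fun i => Cb n i * (-1) ^ (n - i) * INR i * (INR i + c) ^ j
                              + (Cb n i * (-1) ^ (n - i) * (INR i + c) ^ j) * c)).
    2:{ intros i _. simpl. ring. }
    rewrite sum_plus. rewrite <- scal_sum. fold (G n j c). rewrite IH by lia.
    destruct n as [|n']; [lia|]. rewrite sum_shift. simpl INR at 2.
    rewrite (sum_eq _ (fun i => (Cb n' i * (-1) ^ (n' - i) * (INR i + (c + 1)) ^ j) * INR (S n'))).
    2:{ intros i Hi. replace (S n' - S i)%nat with (n' - i)%nat by lia.
        replace (Cb n' i * (-1)^(n'-i) * (INR i + (c+1))^j * INR (S n')) with (INR (S n') * Cb n' i * (-1)^(n'-i) * (INR i + (c+1))^j) by ring. rewrite <- C_succ by lia. rewrite S_INR. replace (INR i + 1 + c) with (INR i + (c + 1)) by ring. ring. }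
    replace (sum_f_R0 (fun i => Cb n' i * (-1) ^ (n' - i) * (INR i + (c + 1)) ^ j * INR (S n')) n')
      with (INR (S n') * G n' j (c + 1)) by (unfold G; rewrite scal_sum; reflexivity).
    rewrite IH by lia. simpl INR. ring.
Qed.

Definition pk (k : nat) : R := match k with O => 0 | S k' => INR k ^ k' end.

Definition B (n : nat) (y : R) : R :=
  sum_f_R0 (fun k => Cb n k * pk k * (y + INR (n - k)) ^ (n - k)) n.

Lemma C_dec n k : (k <= n)%nat -> Cb (S n) k * INR (S n - k) = INR (S n) * Cb n k.
Proof.
  intros H. unfold Binomial.C. replace (S n - k)%nat with (S (n - k)) by lia.
  rewrite !fact_simpl, !mult_INR.
  assert (H1 := INR_fact_neq_0 k). assert (H2 := INR_fact_neq_0 (n - k)).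
  assert (H3 : INR (S (n - k)) <> 0) by (apply not_0_INR; lia).
  field. auto.
Qed.

Lemma sum_n_f_R0 (a : nat -> R) n : sum_n a n = sum_f_R0 a n.
Proof. apply sum_n_Reals. Qed.

Lemma B_derive n y :
  is_derive (B (S n)) y (INR (S n) * B n (y + 1)).
Proof.
  unfold B.
  apply (is_derive_ext (fun t => sum_n (fun k => Cb (S n) k * pk k * (t + INR (S n - k)) ^ (S n - k)) (S n))).
  { intros t. apply sum_n_f_R0. }
  replace (INR (S n) * sum_f_R0 (fun k => Cb n k * pk k * (y + 1 + INR (n - k)) ^ (n - k)) n)
    with (sum_n (fun k => Cb (S n) k * pk k * (INR (S n - k) * (y + INR (S n - k)) ^ (S n - k - 1))) (S n)).
  - apply (is_derive_sum_n (fun k t => Cb (S n) k * pk k * (t + INR (S n - k)) ^ (S n - k))). intros k _. generalize (S n - k)%nat; intros p. auto_derive; auto.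
    replace (Init.Nat.pred p) with (p - 1)%nat by lia. ring.
  - rewrite sum_n_f_R0. rewrite tech5. rewrite Nat.sub_diag, INR_0.
    rewrite Rmult_0_l, Rmult_0_r, Rplus_0_r. rewrite scal_sum. apply sum_eq. intros k Hk.
    replace (S n - k - 1)%nat with (n - k)%nat by lia.
    replace (y + INR (S n - k)) with (y + 1 + INR (n - k)) by
      (replace (S n - k)%nat with (S (n - k)) by lia; rewrite S_INR; ring).
    replace (Cb n k * pk k * (y + 1 + INR (n - k)) ^ (n - k) * INR (S n)) with (INR (S n) * Cb n k * pk k * (y + 1 + INR (n - k)) ^ (n - k)) by ring. rewrite <- C_dec by lia. ring.
Qed.

Lemma pow_der c d p y : is_derive (fun y => c * (y + d) ^ p) y (c * (INR p * (y + d) ^ (p - 1))).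
Proof. auto_derive; auto. replace (Init.Nat.pred p) with (p - 1)%nat by lia. ring. Qed.

Lemma deriv_zero_const (f : R -> R) (a : R) :
  (forall y, derivable_pt_lim f y 0) -> forall y, f y = f a.
Proof.
  intros Hd y. destruct (Rtotal_order y a) as [H|[H|H]].
  - destruct (MVT_cor2 f (fun _ => 0) y a H) as [c [Hc _]]; [intros; apply Hd|]. lra.
  - subst; reflexivity.
  - destruct (MVT_cor2 f (fun _ => 0) a y H) as [c [Hc _]]; [intros; apply Hd|]. lra.
Qed.

Lemma B_formula : forall n, (1 <= n)%nat -> forall y, B n y = INR n * (y + INR n) ^ (n - 1).
Proof.
  induction n as [|n IH]; intros Hn y; [lia|].
  destruct n as [|n'].
  - unfold B. simpl. unfold Binomial.C. simpl. field.
  - set (n := S n') in *.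
    set (f := fun y => B (S n) y - INR (S n) * (y + INR (S n)) ^ (S n - 1)).
    assert (Hd : forall y, derivable_pt_lim f y 0).
    { intros t. apply is_derive_Reals. unfold f.
      eapply is_derive_ext.
      { intros u. reflexivity. }
      replace 0 with (INR (S n) * B n (t + 1) - INR (S n) * (INR (S n - 1) * (t + INR (S n)) ^ (S n - 1 - 1))).
      2:{ rewrite IH by (unfold n; lia). replace (S n - 1)%nat with n by lia.
          rewrite S_INR. replace (n - 1)%nat with (n - 1 - 0)%nat by lia.
          replace (t + 1 + INR n) with (t + (INR n + 1)) by ring. rewrite Nat.sub_0_r. ring. }
      apply (is_derive_minus (B (S n))). { apply B_derive. }
      apply pow_der. }
    assert (Hf : f y = f (- INR (S n))) by (apply deriv_zero_const; auto).
    assert (Hf0 : f (- INR (S n)) = 0).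
    { unfold f. replace (- INR (S n) + INR (S n)) with 0 by ring.
      rewrite pow_i by (unfold n; lia). rewrite Rmult_0_r, Rminus_0_r.
      unfold B. rewrite <- (G_zero n (S n) 0) by lia. unfold G. apply sum_eq. intros k Hk.
      rewrite Rplus_0_r.
      destruct k as [|k].
      - simpl pk. rewrite pow_i by (unfold n; lia). ring.
      - change (pk (S k)) with (INR (S k) ^ k). replace (- INR (S n) + INR (S n - S k)) with ((-1) * INR (S k))
          by (rewrite minus_INR by lia; ring).
        rewrite Rpow_mult_distr. assert (EP : INR (S k) ^ n = INR (S k)^k * INR (S k)^(S n - S k)) by (rewrite <- pow_add; f_equal; lia). rewrite EP. ring. }
    unfold f in Hf, Hf0. lra.
Qed.

Definition tc (n : nat) : R := match n with O => 0 | S n' => INR n ^ n' / INR (fact n) end.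
Definition dd (n : nat) : R := INR n * tc n.

Lemma sum_zero' (g : nat -> R) K : (forall a, (a <= K)%nat -> g a = 0) -> sum_f_R0 g K = 0.
Proof.
  intros H. induction K; simpl. - apply H; lia. - rewrite IHK, H by (try lia; intros; apply H; lia). ring.
Qed.

Lemma coef_id n : (1 <= n)%nat -> sum_f_R0 (fun k => tc k * dd (n - k)) n = (INR n - 1) * tc n.
Proof.
  intros Hn. assert (HB := B_formula n Hn 0). unfold B in HB.
  set (ee := fun j => INR j ^ j / INR (fact j)).
  assert (H1 : sum_f_R0 (fun k => Cb n k * pk k * (0 + INR (n - k)) ^ (n - k)) n
               = INR (fact n) * sum_f_R0 (fun k => tc k * ee (n - k)%nat) n).
  { rewrite scal_sum. apply sum_eq. intros k Hk. rewrite Rplus_0_l. unfold ee, Binomial.C.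
    assert (F1 := INR_fact_neq_0 k). assert (F2 := INR_fact_neq_0 (n - k)).
    destruct k as [|k]; [simpl pk; unfold tc; ring|]. change (pk (S k)) with (INR (S k) ^ k). unfold tc. field. auto. }
  assert (H2 : sum_f_R0 (fun k => tc k * ee (n - k)%nat) n
               = sum_f_R0 (fun k => tc k * dd (n - k)) n + tc n).
  { rewrite (sum_eq _ (fun k => tc k * dd (n - k) + tc k * (if (n - k =? 0)%nat then 1 else 0))).
    2:{ intros k Hk. unfold ee, dd. destruct (n - k)%nat as [|j] eqn:E; simpl Nat.eqb.
        - simpl. unfold tc at 2. field.
        - change (tc (S j)) with (INR (S j) ^ j / INR (fact (S j))). replace (INR (S j) ^ S j) with (INR (S j) * INR (S j) ^ j) by reflexivity. field. apply INR_fact_neq_0. }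
    rewrite sum_plus. f_equal. destruct n as [|n']; [lia|]. rewrite tech5.
    rewrite sum_zero'. 2:{ intros a Ha. replace (S n' - a =? 0)%nat with false. ring.
      symmetry. apply Nat.eqb_neq. lia. }
    rewrite Nat.sub_diag. simpl. ring. }
  rewrite H1, H2, Rplus_0_l in HB.
  destruct n as [|n']; [lia|]. replace (S n' - 1)%nat with n' in HB by lia.
  change (tc (S n')) with (INR (S n') ^ n' / INR (fact (S n'))) in HB |- *.
  assert (F := INR_fact_neq_0 (S n')).
  apply (Rmult_eq_reg_l (INR (fact (S n')))); auto.
  replace (INR (fact (S n')) * ((INR (S n') - 1) * (INR (S n') ^ n' / INR (fact (S n')))))
    with (INR (S n') * INR (S n') ^ n' - INR (S n') ^ n') by (field; auto).
  rewrite <- HB. field. auto.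
Qed.

Lemma exp_pow_n x n : exp x ^ n = exp (INR n * x).
Proof.
  induction n. - simpl. rewrite Rmult_0_l, exp_0. reflexivity.
  - simpl pow. rewrite IHn, <- exp_plus. f_equal. rewrite S_INR. ring.
Qed.

Lemma one_plus_le_exp t : 1 + t <= exp t.
Proof. destruct (Req_dec t 0) as [->|H]. - rewrite exp_0. lra. - left. apply exp_ineq1. auto. Qed.

Lemma e_bound n : INR n ^ n / INR (fact n) <= exp 1 ^ n.
Proof.
  induction n as [|n IH].
  - simpl. lra.
  - destruct n as [|n].
    + simpl. rewrite Rmult_1_r. assert (H := one_plus_le_exp 1). lra.
    + set (m := S n) in *. assert (Hm : 0 < INR m) by (apply lt_0_INR; unfold m; lia).
      assert (E : INR (S m) ^ S m / INR (fact (S m)) = (INR m ^ m / INR (fact m)) * (1 + / INR m) ^ m).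
      { rewrite fact_simpl, mult_INR. replace (1 + / INR m) with (INR (S m) / INR m)
          by (rewrite S_INR; field; lra).
        unfold Rdiv. rewrite Rpow_mult_distr. replace (INR (S m) ^ S m) with (INR (S m) * INR (S m) ^ m) by reflexivity.
        assert (H1 := INR_fact_neq_0 m). rewrite pow_inv.
        assert (INR (S m) <> 0) by (apply not_0_INR; lia).
        field. repeat split; auto. apply pow_nonzero. lra. }
      rewrite E. simpl (exp 1 ^ S m). rewrite Rmult_comm.
      apply Rmult_le_compat.
      * apply pow_le. assert (0 < / INR m) by (apply Rinv_0_lt_compat; lra). lra.
      * apply Rmult_le_pos; [apply pow_le; lra| left; apply Rinv_0_lt_compat, lt_0_INR, lt_O_fact].
      * apply Rle_trans with (exp (/ INR m) ^ m).
        { apply pow_incr. split. - assert (0 < / INR m) by (apply Rinv_0_lt_compat; lra). lra.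
          - apply one_plus_le_exp. }
        rewrite exp_pow_n. right. f_equal. field. lra.
      * exact IH.
Qed.

Lemma tc_nonneg n : 0 <= tc n.
Proof.
  destruct n; unfold tc; [lra|]. apply Rmult_le_pos; [apply pow_le, pos_INR|].
  left. apply Rinv_0_lt_compat, lt_0_INR, lt_O_fact.
Qed.

Lemma dd_bound n : 0 <= dd n <= exp 1 ^ n.
Proof.
  unfold dd. split. { apply Rmult_le_pos; [apply pos_INR| apply tc_nonneg]. }
  destruct n as [|n]. { simpl. lra. }
  eapply Rle_trans; [|apply e_bound]. right. unfold tc. replace (INR (S n) ^ S n) with (INR (S n) * INR (S n) ^ n) by reflexivity.
  unfold Rdiv. ring.
Qed.

Lemma tc_le_dd n : tc n <= dd n.
Proof.
  unfold dd. destruct n as [|n]. { simpl. lra. }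
  rewrite <- (Rmult_1_l (tc (S n))) at 1. apply Rmult_le_compat_r; [apply tc_nonneg|].
  rewrite S_INR. assert (H := pos_INR n). lra.
Qed.

Definition Ee := exp 1.
Lemma Ee_pos : 0 < Ee. Proof. apply exp_pos. Qed.

Lemma radius_ge (a : nat -> R) : (forall n, 0 <= a n <= dd n) -> Rbar_le (/ Ee) (CV_radius a).
Proof.
  intros Ha. apply (proj1 (CV_radius_bounded a)). exists 1. intros n.
  assert (H0 : 0 < / Ee) by (apply Rinv_0_lt_compat, Ee_pos).
  rewrite Rabs_pos_eq by (apply Rmult_le_pos; [apply Ha| apply pow_le; lra]).
  apply Rle_trans with (exp 1 ^ n * (/ Ee) ^ n).
  - apply Rmult_le_compat_r; [apply pow_le; lra|]. eapply Rle_trans; [apply Ha|apply dd_bound].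
  - rewrite <- Rpow_mult_distr. unfold Ee. rewrite Rinv_r by (apply Rgt_not_eq, exp_pos). rewrite pow1. lra.
Qed.

Lemma rad_tc x : Rabs x < / Ee -> Rbar_lt (Rabs x) (CV_radius tc).
Proof.
  intros H. eapply Rbar_lt_le_trans; [|apply radius_ge]. { exact H. }
  intros n. split; [apply tc_nonneg|apply tc_le_dd].
Qed.

Lemma rad_dd x : Rabs x < / Ee -> Rbar_lt (Rabs x) (CV_radius dd).
Proof.
  intros H. eapply Rbar_lt_le_trans; [|apply radius_ge]. { exact H. }
  intros n. split; [apply dd_bound| lra].
Qed.

Definition Tf x := PSeries tc x.
Definition Df x := PSeries dd x.
Definition Sf x := PSeries (PS_decr_1 tc) x.
Definition Tp x := PSeries (PS_derive tc) x.

Lemma scal_pow x k (a : R) : scal (pow_n x k) a = a * x ^ k.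
Proof. rewrite pow_n_pow. unfold scal; simpl; unfold mult; simpl. ring. Qed.

Lemma ex_pseries_series a x : ex_pseries a x -> ex_series (fun k => a k * x ^ k).
Proof. intros H. eapply ex_series_ext; [|exact H]. intros n. apply scal_pow. Qed.

Lemma PSeries_nonneg a x : (forall n, 0 <= a n) -> 0 <= x -> Rbar_lt (Rabs x) (CV_radius a) -> 0 <= PSeries a x.
Proof.
  intros Ha Hx Hr. rewrite <- (PSeries_const_0 x). unfold PSeries.
  apply Series_le. { intros n. split; [lra|]. rewrite Rmult_0_l. apply Rmult_le_pos; [apply Ha|apply pow_le; auto]. }
  apply ex_pseries_series, CV_radius_inside, Hr.
Qed.

Lemma rtc x (Hx : Rabs x < / Ee) : Rbar_lt (Rabs x) (CV_radius tc). Proof. apply rad_tc, Hx. Qed.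
Lemma rdd x (Hx : Rabs x < / Ee) : Rbar_lt (Rabs x) (CV_radius dd). Proof. apply rad_dd, Hx. Qed.

Lemma L_D x : Df x = x * Tp x.
Proof.
  unfold Df, Tp. rewrite PSeries_decr_1_aux by (unfold dd; simpl; ring).
  f_equal.
Qed.

Lemma L_T x (Hx : Rabs x < / Ee) : Tf x = Df x - Tf x * Df x.
Proof.
  unfold Tf, Df. rewrite <- (PSeries_mult tc dd x (rtc x Hx) (rdd x Hx)).
  rewrite <- PSeries_minus.
  2: apply CV_radius_inside, (rdd x Hx).
  2: apply ex_pseries_mult; [apply (rtc x Hx)|apply (rdd x Hx)].
  apply PSeries_ext. intros n. unfold PS_minus, PS_mult. unfold plus, opp; simpl.
  destruct n as [|n].
  - simpl. unfold dd, tc. simpl. ring.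
  - rewrite coef_id by lia. unfold dd. ring.
Qed.

Lemma L_S x : Tf x = x * Sf x.
Proof. unfold Tf, Sf. apply PSeries_decr_1_aux. reflexivity. Qed.

Lemma L_der x (Hx : Rabs x < / Ee) : is_derive Tf x (Tp x).
Proof. apply is_derive_PSeries, (rtc x Hx). Qed.


Lemma abs_ok x : 0 <= x < / Ee -> Rabs x < / Ee.
Proof. intros H. rewrite Rabs_pos_eq; lra. Qed.

Lemma Sf_ge1 x : 0 <= x < / Ee -> 1 <= Sf x.
Proof.
  intros H. assert (Hx := abs_ok x H). unfold Sf.
  rewrite PSeries_decr_1.
  2:{ apply CV_radius_inside. rewrite CV_radius_decr_1. apply rtc; auto. }
  assert (E : PS_decr_1 tc 0 = 1) by (unfold PS_decr_1, tc; simpl; field).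
  rewrite E. assert (0 <= x * PSeries (PS_decr_1 (PS_decr_1 tc)) x); [|lra].
  apply Rmult_le_pos; [lra|]. apply PSeries_nonneg; try lra.
  - intros n. apply tc_nonneg.
  - rewrite !CV_radius_decr_1. apply rtc; auto.
Qed.

Lemma Tp_ge1 x : 0 <= x < / Ee -> 1 <= Tp x.
Proof.
  intros H. assert (Hx := abs_ok x H). unfold Tp.
  rewrite PSeries_decr_1.
  2:{ apply CV_radius_inside. rewrite CV_radius_derive. apply rtc; auto. }
  assert (E : PS_derive tc 0 = 1) by (unfold PS_derive, tc; simpl; field).
  rewrite E. assert (0 <= x * PSeries (PS_decr_1 (PS_derive tc)) x); [|lra].
  apply Rmult_le_pos; [lra|]. apply PSeries_nonneg; try lra.
  - intros n. unfold PS_decr_1, PS_derive. apply Rmult_le_pos; [apply pos_INR|apply tc_nonneg].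
  - rewrite CV_radius_decr_1, CV_radius_derive. apply rtc; auto.
Qed.

Lemma T_pos x : 0 < x < / Ee -> 0 < Tf x.
Proof. intros H. rewrite L_S by (apply abs_ok; lra). assert (H1 := Sf_ge1 x ltac:(lra)). nra. Qed.

Lemma D_pos x : 0 < x < / Ee -> 0 < Df x.
Proof. intros H. rewrite L_D by (apply abs_ok; lra). assert (H1 := Tp_ge1 x ltac:(lra)). nra. Qed.

Lemma T_lt1 x : 0 < x < / Ee -> Tf x < 1.
Proof.
  intros H. assert (H1 := T_pos x H). assert (H2 := D_pos x H).
  assert (H3 := L_T x ltac:(apply abs_ok; lra)). nra.
Qed.

Definition Hf x := Tf x * exp (- Tf x) / x.

Lemma Hf_der x : 0 < x < / Ee -> derivable_pt_lim Hf x 0.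
Proof.
  intros H. assert (Hx := abs_ok x ltac:(lra)). apply is_derive_Reals.
  assert (HD := L_der x Hx).
  unfold Hf. auto_derive.
  - repeat split; try (exists (Tp x); exact HD). lra.
    replace (Derive (fun x0 => Tf x0) x) with (Tp x) by (symmetry; apply is_derive_unique; exact HD).
    assert (E1 := L_D x). assert (E2 := L_T x Hx). rewrite E1 in E2.
    set (t := Tf x) in *. set (p := Tp x) in *. set (e := exp (- t)).
    assert (Z : x * p - t * (x * p) - t = 0) by lra.
    replace ((1 * p * e + t * (- (1 * p) * e)) * / x + t * e * (- (1) * / (x * x)))
      with (e * (x * p - t * (x * p) - t) / (x * x)) by (field; lra).
    rewrite Z. field. lra.
Qed.

Lemma Hf_const a b : 0 < a -> a <= b -> b < / Ee -> Hf a = Hf b.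
Proof.
  intros Ha Hab Hb. destruct (Req_dec a b) as [->|Hne]; auto.
  destruct (MVT_cor2 Hf (fun _ => 0) a b ltac:(lra)) as [c [Hc _]].
  { intros c Hc. apply Hf_der. lra. }
  lra.
Qed.

Definition Phi x := Sf x * exp (- Tf x).

Lemma Phi_Hf x : 0 < x < / Ee -> Phi x = Hf x.
Proof.
  intros H. unfold Phi, Hf. set (e := exp (- Tf x)). rewrite (L_S x) by (apply abs_ok; lra). field. lra.
Qed.

Lemma Phi_cont0 : continuity_pt Phi 0.
Proof.
  assert (H0 : Rabs 0 < / Ee) by (rewrite Rabs_R0; apply Rinv_0_lt_compat, Ee_pos).
  unfold Phi. apply continuity_pt_mult.
  - unfold Sf. apply PSeries_continuity. rewrite CV_radius_decr_1. apply rtc; auto.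
  - apply (continuity_pt_comp (fun y => - Tf y) exp).
    + apply continuity_pt_opp. unfold Tf. apply PSeries_continuity. apply rtc; auto.
    + apply derivable_continuous_pt, derivable_pt_exp.
Qed.

Lemma Phi0 : Phi 0 = 1.
Proof. unfold Phi, Sf, Tf. rewrite !PSeries_0. unfold PS_decr_1, tc. simpl. rewrite Ropp_0, exp_0. field. Qed.

Lemma Phi_one x0 : 0 < x0 < / Ee -> Phi x0 = 1.
Proof.
  intros H. destruct (Req_dec (Phi x0) 1) as [E|Hne]; auto. exfalso.
  assert (Hc := Phi_cont0). unfold continuity_pt, continue_in, limit1_in, limit_in in Hc.
  destruct (Hc (Rabs (Phi x0 - 1))) as [d [Hd Hd2]].
  { apply Rabs_pos_lt. lra. }
  set (x1 := Rmin d x0 / 2).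
  assert (Hx1 : 0 < x1 <= x0 / 2 /\ x1 < d).
  { unfold x1. assert (Rmin d x0 <= x0) by apply Rmin_r. assert (Rmin d x0 <= d) by apply Rmin_l.
    assert (0 < Rmin d x0) by (apply Rmin_pos; lra). lra. }
  specialize (Hd2 x1). simpl in Hd2. unfold R_dist in Hd2. rewrite Phi0 in Hd2.
  assert (Hb : Rabs (Phi x1 - 1) < Rabs (Phi x0 - 1)).
  { apply Hd2. split; [split; [exact I|lra]|]. rewrite Rminus_0_r, Rabs_pos_eq; lra. }
  rewrite Phi_Hf in Hb by lra. rewrite (Hf_const x1 x0) in Hb by lra. rewrite <- Phi_Hf in Hb by lra. lra.
Qed.

Lemma T_fix x : 0 < x < / Ee -> Tf x * exp (- Tf x) = x.
Proof.
  intros H. assert (E := Phi_one x H). unfold Phi in E.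
  set (e := exp (- Tf x)) in *. rewrite (L_S x) by (apply abs_ok; lra). rewrite Rmult_assoc, E. ring.
Qed.

Lemma x_range lam : 0 < lam < 1 -> 0 < lam * exp (- lam) < / Ee.
Proof.
  intros H. split. { apply Rmult_lt_0_compat; [lra|apply exp_pos]. }
  assert (H1 := exp_ineq1 (lam - 1) ltac:(lra)).
  unfold Ee. rewrite <- exp_Ropp.
  assert (E : exp (lam - 1) = exp lam * exp (-1)) by (rewrite <- exp_plus; f_equal; ring).
  assert (E2 : exp lam * exp (- lam) = 1) by (rewrite <- exp_plus, Rplus_opp_r, exp_0; reflexivity).
  rewrite E in H1. assert (Hm := exp_pos (- lam)).
  assert (lam * exp (- lam) < exp lam * exp (-1) * exp (- lam)) by (apply Rmult_lt_compat_r; lra).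
  replace (exp lam * exp (-1) * exp (- lam)) with (exp (-1) * (exp lam * exp (- lam))) in H0 by ring. rewrite E2 in H0. replace (- (1)) with (-1) by ring. lra.
Qed.

Lemma f_strict a b : 0 <= a -> a < b -> b <= 1 -> a * exp (- a) < b * exp (- b).
Proof.
  intros Ha Hab Hb.
  destruct (MVT_cor2 (fun u => u * exp (- u)) (fun u => exp (- u) * (1 - u)) a b Hab) as [c [Hc Hc2]].
  { intros c _. apply is_derive_Reals. auto_derive; auto. ring. }
  assert (0 < exp (- c) * (1 - c) * (b - a)).
  { apply Rmult_lt_0_compat; [apply Rmult_lt_0_compat; [apply exp_pos|lra]|lra]. }
  lra.
Qed.

Lemma T_at lam : 0 < lam < 1 -> Tf (lam * exp (- lam)) = lam.
Proof.
  intros H. set (x := lam * exp (- lam)). assert (Hx := x_range lam H). fold x in Hx.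
  assert (E := T_fix x Hx). assert (P := T_pos x Hx). assert (L := T_lt1 x Hx).
  destruct (Rtotal_order (Tf x) lam) as [Hl|[He|Hg]]; auto.
  - assert (F := f_strict (Tf x) lam ltac:(lra) Hl ltac:(lra)). assert (Ex : x = lam * exp (- lam)) by reflexivity. lra.
  - assert (F := f_strict lam (Tf x) ltac:(lra) Hg ltac:(lra)). assert (Ex : x = lam * exp (- lam)) by reflexivity. lra.
Qed.

Lemma D_at lam : 0 < lam < 1 -> Df (lam * exp (- lam)) = lam / (1 - lam).
Proof.
  intros H. set (x := lam * exp (- lam)). assert (Hx := x_range lam H). fold x in Hx.
  assert (E := L_T x ltac:(apply abs_ok; lra)). assert (T := T_at lam H). fold x in T.
  rewrite T in E. set (D := Df x) in *. apply (Rmult_eq_reg_l (1 - lam)); [|lra].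
  replace ((1 - lam) * (lam / (1 - lam))) with lam by (field; lra). lra.
Qed.

Lemma term_id lam k : (1 <= k)%nat ->
  INR (S k) * PX lam (S k) = lam * exp (- lam) * (dd k * (lam * exp (- lam)) ^ k).
Proof.
  intros Hk. rewrite PX_formula by lia. destruct k as [|k]; [lia|].
  replace (S (S k) - 1)%nat with (S k) by lia. replace (S (S k) - 2)%nat with k by lia.
  unfold dd, tc. rewrite Rpow_mult_distr, exp_pow_n.
  rewrite <- (exp_comb lam (S k)). change (lam ^ S (S k)) with (lam * lam ^ S k).
  rewrite fact_simpl, mult_INR.
  assert (H1 := INR_fact_neq_0 k). assert (H2 : INR (S k) <> 0) by (apply not_0_INR; lia).
  assert (H3 : INR (S (S k)) <> 0) by (apply not_0_INR; lia).
  replace (- (INR (S k) * lam)) with (INR (S k) * - lam) by ring.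
  field. auto.
Qed.

Lemma is_series_ind0 (c : R) : is_series (fun k => if (k =? 0)%nat then c else 0) c.
Proof.
  apply is_series_Reals. intros eps Heps. exists 0%nat. intros n _. unfold R_dist.
  assert (Hs : forall m, sum_f_R0 (fun k => if (k =? 0)%nat then c else 0) m = c).
  { induction m; simpl; auto. rewrite IHm. ring. }
  rewrite Hs. replace (c - c) with 0 by ring. rewrite Rabs_R0. lra.
Qed.

Lemma is_series_D lam : 0 < lam < 1 ->
  is_series (fun k => dd k * (lam * exp (- lam)) ^ k) (lam / (1 - lam)).
Proof.
  intros H. set (x := lam * exp (- lam)). assert (Hx := x_range lam H). fold x in Hx.
  rewrite <- (D_at lam H). fold x.
  assert (Hr : Rbar_lt (Rabs x) (CV_radius dd)) by (apply rad_dd, abs_ok; lra).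
  assert (P := PSeries_correct dd x (CV_radius_inside dd x Hr)).
  eapply is_series_ext; [|exact P]. intros n. apply scal_pow.
Qed.

Lemma is_series_ext_lim (a : nat -> R) l l' : is_series a l -> l = l' -> is_series a l'.
Proof. intros H <-. exact H. Qed.

Lemma series_shape lam (c : R) (f : nat -> R) : 0 < lam < 1 -> f 0%nat = 0 ->
  (forall k, f (S k) = (if (k =? 0)%nat then c else 0) + lam * exp (- lam) * (dd k * (lam * exp (- lam)) ^ k)) ->
  is_series f (c + lam * exp (- lam) * (lam / (1 - lam))).
Proof.
  intros H H0 HS. apply is_series_decr_1.
  apply (is_series_ext_lim _ (c + lam * exp (- lam) * (lam / (1 - lam)))).
  2:{ rewrite H0. unfold plus, opp. simpl. ring. }
  eapply is_series_ext.
  2:{ eapply is_series_ext_lim. apply is_series_plus. apply is_series_ind0. apply is_series_scal. apply is_series_D, H.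
      reflexivity. }
  intros n. rewrite HS. reflexivity.
Qed.

Theorem corollary2 (lam : R) (Hl0 : 0 <= lam) (Hl1 : lam < 1) :
  PW lam 1 = (lam + 1) * exp (- lam) /\
  (forall w : nat, (2 <= w)%nat ->
     PW lam w = INR (w - 1) ^ (w - 2) / (INR w * INR (fact (w - 2)))
                * lam ^ w * exp (- (INR w * lam))) /\
  (0 < lam ->
     infinite_sum (fun w => INR w * PW lam w) (exp (- lam) / (1 - lam)) /\
     infinite_sum (fun z => INR z * PX lam z) (lam * (exp (- lam) / (1 - lam)))).
Proof.
  split; [|split].
  - change (PW lam 1) with (PX lam 0 + PX lam 1). rewrite PX0, PX1. ring.
  - intros w Hw. destruct w as [|[|w]]; try lia. apply PX_formula. lia.
  - intros Hpos. assert (H : 0 < lam < 1) by lra. split.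
    + apply is_series_Reals.
      replace (exp (- lam) / (1 - lam)) with ((lam + 1) * exp (- lam) + lam * exp (- lam) * (lam / (1 - lam)))
        by (field; lra).
      apply series_shape; auto.
      * simpl. ring.
      * intros k. destruct k as [|k].
        -- simpl Nat.eqb. change (PW lam 1) with (PX lam 0 + PX lam 1). rewrite PX0, PX1. unfold dd. simpl. ring.
        -- simpl Nat.eqb. change (PW lam (S (S k))) with (PX lam (S (S k))).
           rewrite term_id by lia. ring.
    + apply is_series_Reals.
      replace (lam * (exp (- lam) / (1 - lam))) with (lam * exp (- lam) + lam * exp (- lam) * (lam / (1 - lam)))
        by (field; lra).
      apply series_shape; auto.
      * simpl. ring.
      * intros k. destruct k as [|k].
        -- simpl Nat.eqb. rewrite PX1. unfold dd. simpl. ring.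
        -- simpl Nat.eqb. rewrite term_id by lia. ring.
Qed.
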